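(* Let $L$ be a loss function, $n_1<n$, $n_2=n-n_1$, and let $S_j$ be uniformly distributed on the $n_1$-subsets of $N=\{1,\dots,n\}$. Suppose that the (asymptotic) values of $\mathbb{E}[L(\hat y_{S_j,i},y_i)\mid S_j,i]$ and of $\mathbb{E}[L(\hat y_{S_j,i},y_i)L(\hat y_{S_j,i'},y_{i'})\mid S_j,i,i']$ for $i,i'\in S_j^c$ do not depend on the particular realization of $S_j$; call them $\mathsf{e}_i$ and $\mathsf{e}_{i,i'}$ respectively (so $\mathsf{e}_{i,i}=\mathbb{E}[L^2(\hat y_{S_j,i},y_i)\mid S_j,i]$). Then the (asymptotic) values of $\mathbb{E}(\hat\mu_j)$ and $\operatorname{Var}(\hat\mu_j)$ are $$\mathbb{E}(\hat\mu_j)=\frac1n\sum_{i=1}^n\mathsf{e}_i,$$ $$\operatorname{Var}(\hat\mu_j)=\frac{1}{n^2n_2}\Big\{\sum_{i=1}^n\big(n\,\mathsf{e}_{i,i}-n_2\,\mathsf{e}_i^2\big)+\frac{2}{n-1}\sum_{1\le i<i'\le n}\big[n(n_2-1)\mathsf{e}_{i,i'}-(n-1)n_2\,\mathsf{e}_i\mathsf{e}_{i'}\big]\Big\}.$$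
   Context: Data $(y_i,\mathbf{x}_i)$, $i=1,\dots,n$. For a training index set $S_j$, $\hat y_{S_j,i}$ is the prediction for observation $i$ of the rule fitted on $\{(y_k,\mathbf{x}_k):k\in S_j\}$, and the average test set error is $\hat\mu_j=\frac{1}{n_2}\sum_{i\in S_j^c}L(\hat y_{S_j,i},y_i)$. *)

(* Defs.v *)
From HB Require Import structures.
From mathcomp Require Import all_boot all_order all_algebra.
From mathcomp Require Import all_classical all_reals all_analysis.
Set Implicit Arguments. Unset Strict Implicit. Unset Printing Implicit Defensive.
Import Order.TTheory GRing.Theory Num.Theory.
Local Open Scope ring_scope.
Local Open Scope classical_set_scope.

Definition condE (R : realType) (d : measure_display) (T : measurableType d)
  (P : probability T R) (X : T -> R) (A : set T) : R :=
  fine (\int[P]_(w in A) (X w)%:E) / fine (P A).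

(* Main.v *)
Require Import Defs.
From HB Require Import structures.
From mathcomp Require Import all_boot all_order all_algebra.
From mathcomp Require Import all_classical all_reals all_analysis.
From mathcomp Require Import measurable_realfun measurable_fun_approximation.
From mathcomp Require Import ring lra zify.
Import Order.TTheory GRing.Theory Num.Theory.
Import numFieldNormedType.Exports.
Local Open Scope ring_scope.
Local Open Scope classical_set_scope.

Section Int.
Context d (T : measurableType d) (R : realType) (P : probability T R).
Notation intg f := (P.-integrable setT (EFin \o f)).

Lemma intD {f g : T -> R} : intg f -> intg g -> intg (fun w => f w + g w).
Proof.
move=> hf hg; apply: (eq_integrable measurableT _ _ _ (integrableD _ hf hg)) => //.
Qed.

Lemma intZ c {f : T -> R} : intg f -> intg (fun w => c * f w).
Proof.
move=> hf; apply: (eq_integrable measurableT _ _ _ (integrableZl _ c hf)) => //.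
Qed.

Lemma intcst c : intg (fun _ : T => c).
Proof. exact: finite_measure_integrable_cst. Qed.

Lemma intsum (I : Type) (s : seq I) (Pr : pred I) (F : I -> T -> R) :
  (forall i, intg (F i)) -> intg (fun w => \sum_(i <- s | Pr i) F i w).
Proof.
move=> hF; elim: s => [|i s IH].
  by apply: (eq_integrable measurableT _ _ _ (intcst 0)) => // x _ /=; rewrite big_nil.
case: (boolP (Pr i)) => Pi.
  by have := intD (hF i) IH; apply: (eq_integrable measurableT) => // x _ /=; rewrite big_cons Pi.
by apply: (eq_integrable measurableT _ _ _ IH) => // x _ /=; rewrite big_cons (negbTE Pi).
Qed.

Lemma int_of_sq {f : T -> R} : measurable_fun setT f ->
  intg (fun w => f w ^+ 2) -> intg f.
Proof.
move=> mf h2; apply: (le_integrable measurableT _ _ (intD (intcst 1) h2)).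
  exact/measurable_EFinP.
move=> x _ /=; rewrite lee_fin.
have -> : f x ^+ 2 = `|f x| ^+ 2 by rewrite real_normK // num_real.
have h0 := normr_ge0 (f x).
rewrite [X in _ <= X]ger0_norm; last by rewrite addr_ge0 // sqr_ge0.
have := sqr_ge0 (`|f x| - 1); nra.
Qed.

Lemma int_prod {f g : T -> R} : measurable_fun setT f -> measurable_fun setT g ->
  intg (fun w => f w ^+ 2) -> intg (fun w => g w ^+ 2) -> intg (fun w => f w * g w).
Proof.
move=> mf mg hf hg; apply: (le_integrable measurableT _ _ (intD hf hg)).
  by apply/measurable_EFinP; exact: measurable_funM.
move=> x _ /=; rewrite lee_fin.
have -> : f x ^+ 2 = `|f x| ^+ 2 by rewrite real_normK // num_real.
have -> : g x ^+ 2 = `|g x| ^+ 2 by rewrite real_normK // num_real.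
have h0 := normr_ge0 (f x); have h1 := normr_ge0 (g x).
rewrite normrM [X in _ <= X]ger0_norm; last by rewrite addr_ge0 // sqr_ge0.
have := sqr_ge0 (`|f x| - `|g x|); nra.
Qed.

Lemma Rint_sum (I : Type) (s : seq I) (Pr : pred I) (D : set T) (F : I -> T -> R) :
  measurable D -> (forall i, intg (F i)) ->
  Rintegral P D (fun w => \sum_(i <- s | Pr i) F i w) =
  \sum_(i <- s | Pr i) Rintegral P D (F i).
Proof.
move=> mD hF; elim: s => [|i s IH].
  under eq_Rintegral => x _ do rewrite big_nil.
  by rewrite big_nil Rintegral_cst // mul0r.
rewrite big_cons; case: (boolP (Pr i)) => Pi; last first.
  by rewrite -IH; apply: eq_Rintegral => x _; rewrite big_cons (negbTE Pi).
rewrite -IH -RintegralD //.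
- by apply: eq_Rintegral => x _; rewrite big_cons Pi.
- exact: (integrableS measurableT mD (subsetT _) (hF i)).
- by apply: (integrableS measurableT mD (subsetT _)); apply: intsum.
Qed.

Lemma Rint_condE (A : set T) (f : T -> R) : measurable A -> intg f ->
  Rintegral P A f = condE P f A * fine (P A).
Proof.
move=> mA hf; rewrite /condE.
have [h0|h0] := eqVneq (fine (P A)) 0.
  have PA0 : P A = 0%E.
    have : P A \is a fin_num by rewrite fin_num_measure.
    by move/fineK => <-; rewrite h0.
  rewrite h0 mulr0 /Rintegral null_set_integral //.
  by apply: (measurable_funS measurableT (subsetT _)); case/integrableP: hf.
by rewrite divfK.
Qed.

Lemma decomp (K : finType) (S : T -> K) (F : K -> T -> R) :
  (forall k, measurable [set w | S w = k]) -> (forall k, intg (F k)) ->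
  intg (fun w => F (S w) w) /\
  Rintegral P setT (fun w => F (S w) w) = \sum_k Rintegral P [set w | S w = k] (F k).
Proof.
move=> mA hF.
have eqF : forall w, F (S w) w = \sum_k (F k \_ [set w | S w = k]) w.
  move=> w; rewrite (bigD1 (S w)) //= big1 ?addr0.
    by rewrite patchE mem_set.
  move=> k kS; rewrite patchE memNset //=.
  by move=> h; rewrite h eqxx in kS.
have hR : forall k, intg (F k \_ [set w | S w = k]).
  move=> k; rewrite -restrict_EFin; apply/(integrable_mkcond _ (mA k)).
  exact: (integrableS measurableT (mA k) (subsetT _) (hF k)).
split.
  have := @intsum K (index_enum K) xpredT _ hR.
  by apply: (eq_integrable measurableT) => // x _ /=; rewrite eqF.
under eq_Rintegral => x _ do rewrite eqF.
rewrite Rint_sum //; apply: eq_bigr => k _.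
by rewrite [RHS]Rintegral_mkcond.
Qed.

End Int.


Local Close Scope classical_set_scope.
Section Comb.
Variable R : comNzRingType.

Lemma sum_if (K : finType) (c : pred K) (x : R) :
  \sum_k (if c k then x else 0) = x *+ #|[set k | c k]|.
Proof.
rewrite -big_mkcond -sumr_const; apply: eq_bigl => k; by rewrite inE.
Qed.

Lemma count_sum2 (K I : finType) (PK : pred K) (Q : K -> I -> bool) (h : I -> I -> R) :
  \sum_(k | PK k) \sum_(i | Q k i) \sum_(j | Q k j) h i j =
  \sum_i \sum_j h i j *+ #|[set k | [&& PK k, Q k i & Q k j]]|.
Proof.
rewrite big_mkcond /=.
rewrite (eq_bigr (fun k => \sum_i \sum_j if [&& PK k, Q k i & Q k j] then h i j else 0)); last first.
  move=> k _; case: (PK k) => /=; last by rewrite big1 // => i _; rewrite big1.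
  rewrite big_mkcond; apply: eq_bigr => i _; case: (Q k i) => /=.
    by rewrite big_mkcond.
  by rewrite big1.
rewrite exchange_big; apply: eq_bigr => i _; rewrite exchange_big; apply: eq_bigr => j _.
by rewrite sum_if.
Qed.

Lemma count_sum1 (K I : finType) (PK : pred K) (Q : K -> I -> bool) (h : I -> R) :
  \sum_(k | PK k) \sum_(i | Q k i) h i =
  \sum_i h i *+ #|[set k | PK k && Q k i]|.
Proof.
rewrite big_mkcond /=.
rewrite (eq_bigr (fun k => \sum_i if PK k && Q k i then h i else 0)); last first.
  move=> k _; case: (PK k) => /=; last by rewrite big1.
  by rewrite big_mkcond.
rewrite exchange_big; apply: eq_bigr => i _.
by rewrite sum_if.
Qed.

Lemma sum_triangle n (f : 'I_n -> 'I_n -> R) :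
  \sum_i \sum_j f i j =
  \sum_i f i i + \sum_(i < n) \sum_(j < n | (i < j)%N) (f i j + f j i).
Proof.
have split3 : forall i : 'I_n, \sum_j f i j = f i i + (\sum_(j < n | (i < j)%N) f i j
    + \sum_(j < n | (j < i)%N) f i j).
  move=> i; rewrite (bigD1 i) //=; congr (_ + _).
  rewrite (bigID (fun j : 'I_n => (i < j)%N)) /=; congr (_ + _); apply: eq_bigl => j;
    rewrite -(inj_eq val_inj) /=; case: (ltngtP i j) => h //=.
under eq_bigr do rewrite split3.
rewrite big_split /=; congr (_ + _).
rewrite big_split /=; under [in RHS]eq_bigr do rewrite big_split /=.
rewrite big_split /=; congr (_ + _).
rewrite (eq_bigr (fun i : 'I_n => \sum_(j < n) if (j < i)%N then f i j else 0)); last first.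
  by move=> i _; rewrite big_mkcond.
rewrite exchange_big /=; apply: eq_bigr => j _.
by rewrite [RHS]big_mkcond.
Qed.
End Comb.

Lemma card1 n n1 (i : 'I_n) :
  #|[set s : {set 'I_n} | (#|s| == n1) && (i \in ~: s)]| = 'C(n.-1, n1).
Proof.
rewrite -[n in 'C(n.-1, _)]card_ord -(cardsC1 i) -cards_draws.
apply: eq_card => s; rewrite !inE finset.subsetC finset.sub1set inE andbC.
by [].
Qed.

Lemma card2 n n1 (i j : 'I_n) : i != j ->
  #|[set s : {set 'I_n} | [&& #|s| == n1, i \in ~: s & j \in ~: s]]| = 'C(n - 2, n1).
Proof.
move=> ij.
have cB : #|~: [set i; j]| = (n - 2)%N.
  have := cardsC [set i; j]; rewrite cards2 ij card_ord.
  move: #|~: _| => x; lia.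
rewrite -cB -cards_draws.
apply: eq_card => s; rewrite !inE finset.subsetC finset.subUset !finset.sub1set.
by rewrite !inE; case: (#|s| == n1); rewrite ?andbT ?andbF.
Qed.

Lemma card1' n n1 (i : 'I_n) :
  #|[set s : {set 'I_n} | [&& #|s| == n1, i \in ~: s & i \in ~: s]]| = 'C(n.-1, n1).
Proof.
rewrite -(@card1 n n1 i); apply: eq_card => s; by rewrite !inE andbb.
Qed.


Lemma final_alg (R : fieldType) (N N2 C C1 c2 Sd So Ssq Sp : R) :
  N != 0 -> N2 != 0 -> C != 0 -> N * C1 = N2 * C ->
  (N - 1) * c2 = (N2 - 1) * C1 -> (N - 1 = 0 -> So = 0 /\ Sp = 0) ->
  N2 ^- 2 * C^-1 * (C1 * Sd + c2 * 2 * So) - (N^-1) ^+ 2 * (Ssq + 2 * Sp) =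
  (N ^+ 2 * N2)^-1 * (N * Sd - N2 * Ssq + 2 / (N - 1) * (N * (N2 - 1) * So - (N - 1) * N2 * Sp)).
Proof.
move=> N0 N20 C0 h1 h2 h3.
have eC1 : C1 = N2 * C / N by rewrite -h1 mulrC mulKf.
have [N1|N1] := eqVneq (N - 1) 0.
  have [-> ->] := h3 N1; rewrite N1 eC1 invr0; field.
  by rewrite N0 N20 C0.
have ec2 : c2 = (N2 - 1) * C1 / (N - 1) by rewrite -h2 mulrC mulKf.
rewrite ec2 eC1; field.
by rewrite N0 N20 C0 N1.
Qed.

Local Open Scope classical_set_scope.

Theorem theorem3 (R : realType) (d : measure_display) (Omega : measurableType d)
  (P : probability Omega R) (n n1 : nat) (hn : (n1 < n)%N)
  (L : R -> R -> R) (y : 'I_n -> Omega -> R)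
  (yhat : {set 'I_n} -> 'I_n -> Omega -> R)
  (S : Omega -> {set 'I_n}) (e1 : 'I_n -> R) (e2 : 'I_n -> 'I_n -> R) :
  (forall s : {set 'I_n}, measurable [set w | S w = s]) ->
  (forall s : {set 'I_n}, P [set w | S w = s] =
     (if #|s| == n1 then ('C(n, n1)%:R)^-1 else 0)%:E) ->
  (forall (s : {set 'I_n}) (i : 'I_n), measurable_fun setT (fun w => L (yhat s i w) (y i w))) ->
  (forall (s : {set 'I_n}) (i : 'I_n), P.-integrable setT (fun w => (L (yhat s i w) (y i w) ^+ 2)%:E)) ->
  (forall (s : {set 'I_n}) (i : 'I_n), #|s| = n1 -> i \notin s ->
     condE P (fun w => L (yhat s i w) (y i w)) [set w | S w = s] = e1 i) ->
  (forall (s : {set 'I_n}) (i i' : 'I_n), #|s| = n1 -> i \notin s -> i' \notin s ->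
     condE P (fun w => L (yhat s i w) (y i w) * L (yhat s i' w) (y i' w))
       [set w | S w = s] = e2 i i') ->
  let n2 := (n - n1)%N in
  let muhat := fun w => (n2%:R)^-1 * \sum_(i in ~: S w) L (yhat (S w) i w) (y i w) in
  let m := (n%:R)^-1 * \sum_(i < n) e1 i in
  (\int[P]_w (muhat w)%:E = m%:E)%E /\
  (\int[P]_w ((muhat w - m) ^+ 2)%:E =
    ((n%:R ^+ 2 * n2%:R)^-1 *
      (\sum_(i < n) (n%:R * e2 i i - n2%:R * e1 i ^+ 2)
       + 2 / (n%:R - 1) *
         \sum_(i < n) \sum_(i' < n | (i < i')%N)
            (n%:R * (n2%:R - 1) * e2 i i' - (n%:R - 1) * n2%:R * e1 i * e1 i')))%:E)%E.
Proof.
move=> mA PA mL iL2 he1 he2 n2 muhat m.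
pose A s := [set w | S w = s].
pose Ls s i w := L (yhat s i w) (y i w).
have iL : forall s i, P.-integrable setT (EFin \o Ls s i).
  by move=> s i; apply: int_of_sq; [exact: mL | exact: iL2].
have iLL : forall s i j, P.-integrable setT (EFin \o (fun w => Ls s i w * Ls s j w)).
  by move=> s i j; apply: int_prod; [exact: mL|exact: mL|exact: iL2|exact: iL2].
have intA : forall s (f : Omega -> R), P.-integrable setT (EFin \o f) ->
    P.-integrable (A s) (EFin \o f).
  by move=> s f hf; apply: (integrableS measurableT (mA s) (subsetT _)).
pose C := 'C(n, n1)%:R : R.
have C0 : C != 0 by rewrite pnatr_eq0 -lt0n bin_gt0 ltnW.
have N0 : n%:R != 0 :> R by rewrite pnatr_eq0 -lt0n (leq_ltn_trans _ hn).
have N20 : n2%:R != 0 :> R by rewrite pnatr_eq0 subn_eq0 -ltnNge.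
have hq : forall s, fine (P (A s)) = if #|s| == n1 then C^-1 else 0.
  by move=> s; rewrite /A PA; case: ifP.
have hRL : forall s i, i \in ~: s -> Rintegral P (A s) (Ls s i) = e1 i * fine (P (A s)).
  move=> s i; rewrite inE => hi; rewrite (@Rint_condE _ _ _ P _ _ (mA s) (iL s i)); have [hs|hs] := eqVneq #|s| n1.
    by rewrite he1 //; apply/eqP.
  by rewrite hq (negbTE hs) !mulr0.
have hRLL : forall s i j, i \in ~: s -> j \in ~: s ->
    Rintegral P (A s) (fun w => Ls s i w * Ls s j w) = e2 i j * fine (P (A s)).
  move=> s i j; rewrite !inE => hi hj; rewrite (@Rint_condE _ _ _ P _ _ (mA s) (iLL s i j)).
  have [hs|hs] := eqVneq #|s| n1.
    by rewrite he2 //; apply/eqP.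
  by rewrite hq (negbTE hs) !mulr0.
pose F1 s w := n2%:R^-1 * \sum_(i in ~: s) Ls s i w.
have iF1 : forall s, P.-integrable setT (EFin \o F1 s).
  by move=> s; apply: intZ; apply: intsum.
have RF1 : forall s, Rintegral P (A s) (F1 s) =
    n2%:R^-1 * \sum_(i in ~: s) e1 i * fine (P (A s)).
  move=> s; rewrite /F1 RintegralZl; [|exact: mA|by apply: intA; apply: intsum].
  rewrite Rint_sum; [|exact: mA|exact: iL].
  congr (_ * _); apply: eq_bigr => i hi; exact: hRL.
have := @decomp _ _ _ P _ S F1 mA iF1 => -[imu Emu].
have hC1 : n%:R * 'C(n.-1, n1)%:R = n2%:R * C :> R by rewrite -!natrM mul_bin_down.
have eC1 : 'C(n.-1, n1)%:R = n2%:R * C / n%:R :> R by rewrite -hC1 mulrC mulKf.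
have hm : \sum_s Rintegral P (A s) (F1 s) = m.
  under eq_bigr => s _ do rewrite RF1 hq.
  rewrite (eq_bigr (fun s : {set 'I_n} => if #|s| == n1 then n2%:R^-1 * C^-1 * \sum_(i in ~: s) e1 i else 0)); last first.
    move=> s _; case: ifP => _; last by rewrite big1 ?mulr0 // => i _; rewrite mulr0.
    by rewrite -mulr_suml; ring.
  rewrite -big_mkcond -mulr_sumr count_sum1.
  under eq_bigr => i _ do rewrite card1.
  rewrite sumrMnl /m -[(\sum_i e1 i) *+ _]mulr_natr eC1; field.
  by rewrite N0 N20 C0.
have E1 : Rintegral P setT muhat = m by rewrite -hm -Emu.
split.
  rewrite -E1 /Rintegral fineK //; exact: integrable_fin_num imu.
pose S2 s w := \sum_(i in ~: s) \sum_(j in ~: s) Ls s i w * Ls s j w.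
have sq : forall s w, S2 s w = (\sum_(i in ~: s) Ls s i w) ^+ 2.
  move=> s w; rewrite expr2 mulr_suml; apply: eq_bigr => i _; by rewrite mulr_sumr.
have iS2 : forall s, P.-integrable setT (EFin \o S2 s).
  move=> s; rewrite /S2; apply: intsum => i; apply: intsum => j; exact: iLL.
pose H s w := (n2%:R^-1) ^+ 2 * S2 s w + (- (2 * m)) * F1 s w + m ^+ 2.
have iH : forall s, P.-integrable setT (EFin \o H s).
  move=> s; rewrite /H; apply: intD; last exact: intcst.
  by apply: intD; apply: intZ.
have eqH : forall w, (muhat w - m) ^+ 2 = H (S w) w.
  move=> w; change (muhat w) with (F1 (S w) w); rewrite /H sq /F1; ring.
have RS2 : forall s, Rintegral P (A s) (S2 s) =
    \sum_(i in ~: s) \sum_(j in ~: s) e2 i j * fine (P (A s)).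
  move=> s; rewrite /S2 Rint_sum; [|exact: mA|move=> i; apply: intsum => j; exact: iLL].
  apply: eq_bigr => i hi; rewrite Rint_sum; [|exact: mA|move=> j; exact: iLL].
  apply: eq_bigr => j hj; exact: hRLL.
have RH : forall s, Rintegral P (A s) (H s) =
    (n2%:R^-1) ^+ 2 * Rintegral P (A s) (S2 s) + (- (2 * m)) * Rintegral P (A s) (F1 s)
    + m ^+ 2 * fine (P (A s)).
  move=> s; rewrite /H RintegralD; [|exact: mA| |apply: intA; exact: intcst]; last first.
    by apply: intA; apply: intD; [apply: intZ; exact: iS2|apply: intZ; exact: iF1].
  rewrite RintegralD; [|exact: mA|apply: intA; apply: intZ; exact: iS2|apply: intA; apply: intZ; exact: iF1].
  rewrite RintegralZl; [|exact: mA|apply: intA; exact: iS2].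
  rewrite RintegralZl; [|exact: mA|apply: intA; exact: iF1].
  by rewrite Rintegral_cst //; exact: mA.
have := @decomp _ _ _ P _ S H mA iH => -[iH2 EH].
have hsq : \sum_s fine (P (A s)) = 1.
  under eq_bigr => s _ do rewrite hq.
  by rewrite sum_if card_draws card_ord -mulr_natr mulVf.
pose C1 := 'C(n.-1, n1)%:R : R.
pose c2 := 'C(n - 2, n1)%:R : R.
pose Sd := \sum_(i < n) e2 i i.
pose So := \sum_(i < n) \sum_(j < n | (i < j)%N) e2 i j.
pose Se := \sum_(i < n) e1 i.
pose Ssq := \sum_(i < n) e1 i ^+ 2.
pose Sp := \sum_(i < n) \sum_(j < n | (i < j)%N) e1 i * e1 j.
have off : forall i j : 'I_n, (i < j)%N ->
    e2 i j *+ #|[set s : {set 'I_n} | [&& #|s| == n1, i \in ~: s & j \in ~: s]]%SET|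
  + e2 j i *+ #|[set s : {set 'I_n} | [&& #|s| == n1, j \in ~: s & i \in ~: s]]%SET|
  = e2 i j * c2 * 2.
  move=> i j hij.
  have ij : i != j by rewrite -(inj_eq val_inj) /= ltn_eqF.
  have ji : j != i by rewrite eq_sym.
  rewrite (@card2 n n1 i j ij) (@card2 n n1 j i ji).
  suff -> : e2 j i *+ 'C(n - 2, n1) = e2 i j *+ 'C(n - 2, n1).
    by rewrite /c2 -mulr_natr; ring.
  have [->|cpos] := posnP 'C(n - 2, n1); first by rewrite !mulr0n.
  move: cpos; rewrite -(@card2 n n1 i j ij) => /card_gt0P [s].
  rewrite !inE => /and3P [hs hi hj].
  rewrite -(he2 s i j (eqP hs) hi hj) -(he2 s j i (eqP hs) hj hi).
  congr (_ *+ _); congr condE; apply/funext => w; exact: mulrC.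
have hX : \sum_s (n2%:R^-1 ^+ 2 * (\sum_(i in ~: s) \sum_(j in ~: s) e2 i j * fine (P (A s))))
    = n2%:R^-1 ^+ 2 * (C^-1 * (C1 * Sd + c2 * 2 * So)).
  rewrite -(big_distrr (n2%:R^-1 ^+ 2)) /=; congr (_ * _).
  under eq_bigr => s _ do rewrite hq.
  rewrite (eq_bigr (fun s : {set 'I_n} => if #|s| == n1 then
      C^-1 * \sum_(i in ~: s) \sum_(j in ~: s) e2 i j else 0)); last first.
    move=> s _; case: ifP => _.
      rewrite mulr_sumr; apply: eq_bigr => i _; rewrite mulr_sumr.
      by apply: eq_bigr => j _; exact: mulrC.
    by rewrite big1 // => i _; rewrite big1 // => j _; rewrite mulr0.
  rewrite -big_mkcond -mulr_sumr count_sum2 sum_triangle; congr (_ * _).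
  under eq_bigr => i _ do rewrite card1'.
  rewrite sumrMnl; congr (_ + _); first by rewrite /C1 mulrC mulr_natr.
  rewrite /So mulr_sumr; apply: eq_bigr => i _; rewrite mulr_sumr.
  apply: eq_bigr => j hij; rewrite off //; ring.
have hR1 : \sum_(i < n) (n%:R * e2 i i - n2%:R * e1 i ^+ 2) = n%:R * Sd - n2%:R * Ssq.
  by rewrite /Sd /Ssq !mulr_sumr -sumrB.
have hR2 : \sum_(i < n) \sum_(i' < n | (i < i')%N)
    (n%:R * (n2%:R - 1) * e2 i i' - (n%:R - 1) * n2%:R * e1 i * e1 i') =
    n%:R * (n2%:R - 1) * So - (n%:R - 1) * n2%:R * Sp.
  rewrite /So /Sp !mulr_sumr -sumrB; apply: eq_bigr => i _.
  rewrite !mulr_sumr -sumrB; apply: eq_bigr => j _; ring.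
have hSe : Se ^+ 2 = Ssq + 2 * Sp.
  rewrite expr2 /Se mulr_suml.
  under eq_bigr => i _ do rewrite mulr_sumr.
  rewrite sum_triangle /Ssq /Sp; congr (_ + _).
  rewrite mulr_sumr; apply: eq_bigr => i _; rewrite mulr_sumr.
  by apply: eq_bigr => j _; ring.
have npos : (0 < n)%N by apply: leq_ltn_trans hn.
have ea : (n.-1)%:R = n%:R - 1 :> R by rewrite -subn1 natrB.
have hc2 : (n%:R - 1) * c2 = (n2%:R - 1) * C1.
  have h := mul_bin_down n.-1 n1.
  have e1' : n.-1.-1 = (n - 2)%N by lia.
  have e2' : (n.-1 - n1 = n2 - 1)%N by rewrite /n2; lia.
  rewrite e1' e2' in h.
  have eb : (n2 - 1)%:R = n2%:R - 1 :> R by rewrite natrB // subn_gt0.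
  by rewrite /c2 /C1 -ea -eb -!natrM h.
have hn1 : n%:R - 1 = 0 :> R -> So = 0 /\ Sp = 0.
  move=> h0.
  have n1' : n = 1%N.
    have : (n.-1)%:R = 0 :> R by rewrite ea.
    by move/eqP; rewrite pnatr_eq0 => /eqP; lia.
  split; rewrite /So /Sp big1 // => i _; rewrite big1 // => j hij; exfalso;
    move: (ltn_ord j) hij; move: (nat_of_ord i) (nat_of_ord j) => a b; lia.
under eq_integral => w _ do rewrite eqH.
rewrite -[LHS]fineK; last exact: (integrable_fin_num measurableT iH2).
congr (_%:E).
transitivity (Rintegral P setT (fun w => H (S w) w)); first by [].
rewrite EH.
under eq_bigr => s _ do rewrite RH RS2.
rewrite big_split big_split /= hX.
rewrite -(big_distrr (- (2 * m))) /= hm -(big_distrr (m ^+ 2)) /= hsq.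
rewrite hR1 hR2.
have -> : n2%:R^-1 ^+ 2 * (C^-1 * (C1 * Sd + c2 * 2 * So)) + - (2 * m) * m + m ^+ 2 * 1
   = n2%:R ^- 2 * C^-1 * (C1 * Sd + c2 * 2 * So) - (n%:R^-1) ^+ 2 * (Ssq + 2 * Sp).
  by rewrite -hSe /m -/Se exprVn; ring.
by apply: final_alg => //; rewrite /C1 hC1.
Qed.
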